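(* (Equivalence of CPL* natural deduction and the focused sequent calculus.) Fix a set $W$ of worlds with a converse well-founded accessibility relation $\prec$. For every (unpolarized) context $\Gamma$, proposition $A$ and world $w$: $\Gamma \vdash_{\mathbf{CPL*}} A[w]$ if and only if the inversion sequent $\Gamma^{\circledcirc}; \cdot \Longrightarrow A^{\ominus}[w]$ is derivable in the focused sequent calculus.
   Context: Fix a set $W$ of worlds and a binary relation $\prec$ on $W$ that is converse well-founded (no infinite chain $w_0\prec w_1\prec\cdots$); $\prec^*$ is its reflexive–transitive closure. Atomic propositions are each designated either positive ($Q^+$) or negative ($Q^-$). Unpolarized propositions: $A,B,C ::= Q \mid \bot \mid A\supset B \mid \Diamond A \mid \Box A$; an unpolarized context $\Gamma$ is a finite collection of judgments $A[w]$. Natural deduction $\Gamma \vdash_{\mathbf{CPL*}} A[w]$, defined one world at a time (provability at $w$ after provability at all worlds reachable from $w$ by one or more $\prec$-steps) as the least relation closed under: (hyp) $\Gamma, A[w]\vdash A[w]$; ($\bot E$) $w'\prec^* w$ and $\Gamma\vdash\bot[w]$ imply $\Gamma\vdash C[w']$; ($\supset I$) $\Gamma,A[w]\vdash B[w]$ implies $\Gamma\vdash A\supset B[w]$; ($\supset E$) $\Gamma\vdash A\supset B[w]$ and $\Gamma\vdash A[w]$ imply $\Gamma\vdash B[w]$; ($\Diamond I$) $w\prec w'$ and $\Gamma\vdash A[w']$ imply $\Gamma\vdash\Diamond A[w]$; ($\Box I$) if $\Gamma\vdash A[w']$ for all $w'$ with $w\prec w'$ then $\Gamma\vdash\Box A[w]$;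 ($\Diamond E$) if $w''\prec^* w$, $\Gamma\vdash\Diamond A[w]$, and for all $w'$ with $w\prec w'$, $\Gamma\vdash A[w']$ implies $\Gamma\vdash C[w'']$, then $\Gamma\vdash C[w'']$; ($\Box E$) if $w''\prec^* w$, $\Gamma\vdash\Box A[w]$, and ($\Gamma\vdash A[w']$ for all $w'$ with $w\prec w'$) implies $\Gamma\vdash C[w'']$, then $\Gamma\vdash C[w'']$. Polarized propositions: $A^+ ::= Q^+ \mid {\downarrow}A^- \mid \bot \mid \Diamond A^+ \mid \Box A^+$ and $A^- ::= Q^- \mid {\uparrow}A^+ \mid A^+ \supset B^-$. $Q^+$ and ${\downarrow}A^-$ are $\mathit{stable}^+$; $Q^-$ and ${\uparrow}A^+$ are $\mathit{stable}^-$. In the focused calculus, $\Gamma$ is a finite collection of judgments $A^+[w]$ and the inversion context $\Omega$ is either empty ($\cdot$) or a single $A^+[w]$. There are three mutually defined judgments — right focus $\Gamma \vdash [A^+[w]]$, inversion $\Gamma;\Omega \Longrightarrow C^-[w]$, and left focus $\Gamma;[A^-[w']] \Longrightarrow C^-[w]$ — defined one world at a time (well-founded by converse well-foundedness), as the least relations closed under: Right focus: ($QR^+$) $\Gamma, Q^+[w] \vdash [Q^+[w]]$; (${\downarrow}R$) $\Gamma;\cdot\Longrightarrow A^-[w]$ implies $\Gamma\vdash[{\downarrow}A^-[w]]$; ($\Diamond R$) $w\prec w'$ and $\Gamma;\cdot\Longrightarrow {\uparrow}A^+[w']$ imply $\Gamma\vdash[\Diamond A^+[w]]$; ($\Box R$)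 if $\Gamma;\cdot\Longrightarrow{\uparrow}A^+[w']$ for all $w'$ with $w\prec w'$, then $\Gamma\vdash[\Box A^+[w]]$. Inversion: ($\supset R$) $\Gamma;A^+[w]\Longrightarrow B^-[w]$ implies $\Gamma;\cdot\Longrightarrow A^+\supset B^-[w]$; ($L$) if $A^+$ is $\mathit{stable}^+$ and $\Gamma, A^+[w'];\cdot\Longrightarrow C^-[w]$, then $\Gamma; A^+[w']\Longrightarrow C^-[w]$; (${\downarrow}L$) if $C^-$ is $\mathit{stable}^-$, $w\prec^* w'$, and $\Gamma,{\downarrow}A^-[w'];[A^-[w']]\Longrightarrow C^-[w]$, then $\Gamma,{\downarrow}A^-[w'];\cdot\Longrightarrow C^-[w]$; ($\bot L$) $\Gamma;\bot[w']\Longrightarrow C^-[w]$; ($\Diamond L$) if for all $w$ with $w'\prec w$, $\Gamma;\cdot\Longrightarrow{\uparrow}A^+[w]$ implies $\Gamma;\cdot\Longrightarrow C^-[w'']$, then $\Gamma;\Diamond A^+[w']\Longrightarrow C^-[w'']$; ($\Box L$) if ($\Gamma;\cdot\Longrightarrow{\uparrow}A^+[w]$ for all $w$ with $w'\prec w$) implies $\Gamma;\cdot\Longrightarrow C^-[w'']$, then $\Gamma;\Box A^+[w']\Longrightarrow C^-[w'']$; (${\uparrow}R$) $\Gamma\vdash[A^+[w]]$ implies $\Gamma;\cdot\Longrightarrow{\uparrow}A^+[w]$. Left focus: ($QL^-$) $\Gamma;[Q^-[w]]\Longrightarrow Q^-[w]$; (${\uparrow}L$) $\Gamma;A^+[w']\Longrightarrow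 C^-[w]$ implies $\Gamma;[{\uparrow}A^+[w']]\Longrightarrow C^-[w]$; ($\supset L$) $\Gamma\vdash[A^+[w']]$ and $\Gamma;[B^-[w']]\Longrightarrow C^-[w]$ imply $\Gamma;[A^+\supset B^-[w']]\Longrightarrow C^-[w]$. Polarization: $(Q^+)^\oplus=Q^+$, $(\bot)^\oplus=\bot$, $(\Diamond A)^\oplus=\Diamond A^\oplus$, $(\Box A)^\oplus=\Box A^\oplus$, $(Q^-)^\oplus={\downarrow}Q^-$, $(A\supset B)^\oplus={\downarrow}(A^\oplus\supset B^\ominus)$; $(Q^+)^\ominus={\uparrow}Q^+$, $(\bot)^\ominus={\uparrow}\bot$, $(\Diamond A)^\ominus={\uparrow}(\Diamond A^\oplus)$, $(\Box A)^\ominus={\uparrow}(\Box A^\oplus)$, $(Q^-)^\ominus=Q^-$, $(A\supset B)^\ominus=A^\oplus\supset B^\ominus$. Contexts: $(\cdot)^\circledcirc=\cdot$, $(\Gamma,Q^+[w])^\circledcirc=\Gamma^\circledcirc,Q^+[w]$, $(\Gamma,\bot[w])^\circledcirc=\Gamma^\circledcirc,{\downarrow}{\uparrow}\bot[w]$, $(\Gamma,\Diamond A[w])^\circledcirc=\Gamma^\circledcirc,{\downarrow}{\uparrow}(\Diamond A^\oplus)[w]$, $(\Gamma,\Box A[w])^\circledcirc=\Gamma^\circledcirc,{\downarrow}{\uparrow}(\Box A^\oplus)[w]$, $(\Gamma,Q^-[w])^\circledcirc=\Gamma^\circledcirc,{\downarrow}Q^-[w]$, $(\Gamma,A\supset B[w])^\circledcirc=\Gamma^\circledcirc,{\downarrow}(A^\oplus\supset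 B^\ominus)[w]$. *)

(* Defs.v *)
(* CPL* natural deduction and its focused sequent calculus,
   both defined "one world at a time" by well-founded recursion on worlds
   (strictly later worlds are smaller), each level being an inductive
   (least) relation whose premises at strictly later worlds are read from
   the already-defined levels (the oracle O). *)
From Stdlib Require Import List Relations Wellfounded.
Import ListNotations.

Inductive uprop : Type :=
| UPosAt : nat -> uprop
| UNegAt : nat -> uprop
| UBot : uprop
| UImp : uprop -> uprop -> uprop
| UDia : uprop -> uprop
| UBox : uprop -> uprop.

Inductive pos : Type :=
| PAtom : nat -> pos
| Down : neg -> pos
| PBot : pos
| PDia : pos -> pos
| PBox : pos -> pos
with neg : Type :=
| NAtom : nat -> neg
| Up : pos -> neg
| Imp : pos -> neg -> neg.

Definition stable_pos (A : pos) : Prop :=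
  match A with PAtom _ | Down _ => True | _ => False end.
Definition stable_neg (C : neg) : Prop :=
  match C with NAtom _ | Up _ => True | _ => False end.

Fixpoint oplus (A : uprop) : pos :=
  match A with
  | UPosAt q => PAtom q
  | UBot => PBot
  | UDia B => PDia (oplus B)
  | UBox B => PBox (oplus B)
  | UNegAt q => Down (NAtom q)
  | UImp B C => Down (Imp (oplus B) (ominus C))
  end
with ominus (A : uprop) : neg :=
  match A with
  | UPosAt q => Up (PAtom q)
  | UBot => Up PBot
  | UDia B => Up (PDia (oplus B))
  | UBox B => Up (PBox (oplus B))
  | UNegAt q => NAtom q
  | UImp B C => Imp (oplus B) (ominus C)
  end.

Definition ctx_hyp (A : uprop) : pos :=
  match A with
  | UPosAt q => PAtom q
  | UBot => Down (Up PBot)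
  | UDia B => Down (Up (PDia (oplus B)))
  | UBox B => Down (Up (PBox (oplus B)))
  | UNegAt q => Down (NAtom q)
  | UImp B C => Down (Imp (oplus B) (ominus C))
  end.

Definition ctx_pol {W : Type} (G : list (uprop * W)) : list (pos * W) :=
  map (fun p => (ctx_hyp (fst p), snd p)) G.

Section Levels.
Variable W : Type.
Variable prec : W -> W -> Prop.

Definition uctx := list (uprop * W).
Definition pctx := list (pos * W).

(* O u G A : the (already defined) judgment G |- A[u] at a strictly later u *)
Inductive ND_at (O : W -> uctx -> uprop -> Prop) (v : W) : uctx -> uprop -> Prop :=
| nd_hyp : forall G A, In (A, v) G -> ND_at O v G A
| nd_botE_same : forall G C, ND_at O v G UBot -> ND_at O v G C
| nd_botE_later : forall G C w, clos_trans W prec v w -> O w G UBot -> ND_at O v G C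
| nd_impI : forall G A B, ND_at O v ((A, v) :: G) B -> ND_at O v G (UImp A B)
| nd_impE : forall G A B, ND_at O v G (UImp A B) -> ND_at O v G A -> ND_at O v G B
| nd_diaI : forall G A w', prec v w' -> O w' G A -> ND_at O v G (UDia A)
| nd_boxI : forall G A, (forall w', prec v w' -> O w' G A) -> ND_at O v G (UBox A)
| nd_diaE_same : forall G A C,
    ND_at O v G (UDia A) ->
    (forall w', prec v w' -> O w' G A -> ND_at O v G C) -> ND_at O v G C
| nd_diaE_later : forall G A C w, clos_trans W prec v w ->
    O w G (UDia A) ->
    (forall w', prec w w' -> O w' G A -> ND_at O v G C) -> ND_at O v G C
| nd_boxE_same : forall G A C,
    ND_at O v G (UBox A) ->
    ((forall w', prec v w' -> O w' G A) -> ND_at O v G C) -> ND_at O v G C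
| nd_boxE_later : forall G A C w, clos_trans W prec v w ->
    O w G (UBox A) ->
    ((forall w', prec w w' -> O w' G A) -> ND_at O v G C) -> ND_at O v G C.

Inductive fjudg : Type :=
| JRF : pctx -> pos -> fjudg                          (* G |- [A[v]] *)
| JInv : pctx -> option (pos * W) -> neg -> fjudg     (* G; Omega ==> C[v] *)
| JLF : pctx -> neg -> W -> neg -> fjudg.             (* G; [A[w']] ==> C[v] *)

Inductive Foc_at (O : W -> fjudg -> Prop) (v : W) : fjudg -> Prop :=
| f_QR : forall G q, In (PAtom q, v) G -> Foc_at O v (JRF G (PAtom q))
| f_DownR : forall G A, Foc_at O v (JInv G None A) -> Foc_at O v (JRF G (Down A))
| f_DiaR : forall G A w', prec v w' -> O w' (JInv G None (Up A)) ->
    Foc_at O v (JRF G (PDia A))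
| f_BoxR : forall G A, (forall w', prec v w' -> O w' (JInv G None (Up A))) ->
    Foc_at O v (JRF G (PBox A))
| f_ImpR : forall G A B, Foc_at O v (JInv G (Some (A, v)) B) ->
    Foc_at O v (JInv G None (Imp A B))
| f_L : forall G A w' C, stable_pos A -> Foc_at O v (JInv ((A, w') :: G) None C) ->
    Foc_at O v (JInv G (Some (A, w')) C)
| f_DownL : forall G A w' C, In (Down A, w') G -> stable_neg C ->
    clos_refl_trans W prec v w' -> Foc_at O v (JLF G A w' C) ->
    Foc_at O v (JInv G None C)
| f_BotL : forall G w' C, Foc_at O v (JInv G (Some (PBot, w')) C)
| f_DiaL : forall G A w' C, clos_refl_trans W prec v w' ->
    (forall w, prec w' w -> O w (JInv G None (Up A)) -> Foc_at O v (JInv G None C)) ->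
    Foc_at O v (JInv G (Some (PDia A, w')) C)
| f_BoxL : forall G A w' C, clos_refl_trans W prec v w' ->
    ((forall w, prec w' w -> O w (JInv G None (Up A))) -> Foc_at O v (JInv G None C)) ->
    Foc_at O v (JInv G (Some (PBox A, w')) C)
| f_UpR : forall G A, Foc_at O v (JRF G A) -> Foc_at O v (JInv G None (Up A))
| f_QL : forall G q, Foc_at O v (JLF G (NAtom q) v (NAtom q))
| f_UpL : forall G A w' C, Foc_at O v (JInv G (Some (A, w')) C) ->
    Foc_at O v (JLF G (Up A) w' C)
| f_ImpL_same : forall G A B C, Foc_at O v (JRF G A) -> Foc_at O v (JLF G B v C) ->
    Foc_at O v (JLF G (Imp A B) v C)
| f_ImpL_later : forall G A B w' C, clos_trans W prec v w' -> O w' (JRF G A) ->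
    Foc_at O v (JLF G B w' C) -> Foc_at O v (JLF G (Imp A B) w' C).

(* "u is strictly later than v" as a well-founded order *)
Definition later (u v : W) : Prop := clos_trans W (fun x y => prec y x) u v.

Definition later_wf (wf : well_founded (fun x y => prec y x)) : well_founded later :=
  wf_clos_trans W (fun x y => prec y x) wf.

Definition ND (wf : well_founded (fun x y => prec y x)) : W -> uctx -> uprop -> Prop :=
  Fix (later_wf wf) (fun _ => uctx -> uprop -> Prop)
    (fun v rec => ND_at (fun u G A => exists h : later u v, rec u h G A) v).

Definition Foc (wf : well_founded (fun x y => prec y x)) : W -> fjudg -> Prop :=
  Fix (later_wf wf) (fun _ => fjudg -> Prop)
    (fun v rec => Foc_at (fun u j => exists h : later u v, rec u h j) v).

Definition nd_derivable (wf : well_founded (fun x y => prec y x))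
  (G : uctx) (A : uprop) (w : W) : Prop := ND wf w G A.

Definition inv_derivable (wf : well_founded (fun x y => prec y x))
  (G : pctx) (Om : option (pos * W)) (C : neg) (w : W) : Prop :=
  Foc wf w (JInv G Om C).

End Levels.

(* Main.v *)
Require Import Defs.
From Stdlib Require Import List Relations Wellfounded Classical FunctionalExtensionality.
Import ListNotations.

Section Main.
Variable W : Type.
Variable prec : W -> W -> Prop.
Variable wf : well_founded (fun x y => prec y x).

Definition LT := later W prec.
Definition OF (v : W) : W -> fjudg W -> Prop :=
  fun u j => exists h : later W prec u v, Foc W prec wf u j.
Definition ON (v : W) : W -> uctx W -> uprop -> Prop :=
  fun u G A => exists h : later W prec u v, ND W prec wf u G A.

Lemma Foc_eq v j : Foc W prec wf v j <-> Foc_at W prec (OF v) v j.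
Proof.
  unfold Foc at 1. rewrite Fix_eq. reflexivity.
  intros x f g H. assert (E : f = g).
  { apply functional_extensionality_dep; intro y.
    apply functional_extensionality_dep; intro p. apply H. }
  subst; reflexivity.
Qed.

Lemma ND_eq v G A : ND W prec wf v G A <-> ND_at W prec (ON v) v G A.
Proof.
  unfold ND at 1. rewrite Fix_eq. reflexivity.
  intros x f g H. assert (E : f = g).
  { apply functional_extensionality_dep; intro y.
    apply functional_extensionality_dep; intro p. apply H. }
  subst; reflexivity.
Qed.

Lemma OF_iff v u j : OF v u j <-> LT u v /\ Foc W prec wf u j.
Proof. unfold OF, LT; split; [intros [h H]; auto | intros [h H]; exists h; auto]. Qed.
Lemma ON_iff v u G A : ON v u G A <-> LT u v /\ ND W prec wf u G A.
Proof. unfold ON, LT; split; [intros [h H]; auto | intros [h H]; exists h; auto]. Qed.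

Lemma LT_wf : well_founded LT.
Proof. apply later_wf; exact wf. Qed.

Lemma LT_irrefl v : ~ LT v v.
Proof.
  intro H. assert (A := LT_wf v).
  assert (forall x, Acc LT x -> x <> v).
  { intros x Ax. induction Ax as [x _ IH]. intro E; subst.
    apply (IH v H); reflexivity. }
  apply (H0 v A); reflexivity.
Qed.

Lemma LT_trans a b c : LT a b -> LT b c -> LT a c.
Proof. unfold LT, later. intros; eapply t_trans; eauto. Qed.

Lemma ct_LT v w : clos_trans W prec v w -> LT w v.
Proof. unfold LT, later. induction 1. apply t_step; auto. eapply t_trans; eauto. Qed.

Lemma LT_ct v w : LT w v -> clos_trans W prec v w.
Proof. unfold LT, later. induction 1. apply t_step; auto. eapply t_trans; eauto. Qed.

Lemma prec_LT v w : prec v w -> LT w v.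
Proof. intro; apply ct_LT; apply t_step; auto. Qed.

Lemma rt_cases v w : clos_refl_trans W prec v w -> v = w \/ LT w v.
Proof.
  intro H. apply clos_rt_rt1n in H. induction H. auto.
  right. destruct IHclos_refl_trans_1n as [E|L].
  subst. apply prec_LT; auto. eapply LT_trans; eauto. apply prec_LT; auto.
Qed.

Lemma rt_of v w : v = w \/ LT w v -> clos_refl_trans W prec v w.
Proof.
  intros [E|L]. subst; apply rt_refl. apply clos_t_clos_rt. apply LT_ct; auto.
Qed.

Lemma rt_LT_trans v w x : clos_refl_trans W prec v w -> LT x w -> LT x v.
Proof. intros H L; destruct (rt_cases _ _ H) as [E|L2]; subst; auto. eapply LT_trans; eauto. Qed.

Lemma LT_rt_trans u w x : LT w u -> clos_refl_trans W prec w x -> LT x u.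
Proof. intros L H; destruct (rt_cases _ _ H) as [E|L2]; subst; auto. eapply LT_trans; eauto. Qed.

Lemma rt_trans' a b c : clos_refl_trans W prec a b -> clos_refl_trans W prec b c -> clos_refl_trans W prec a c.
Proof. intros; eapply rt_trans; eauto. Qed.

Lemma rt_LT_contra u w : clos_refl_trans W prec u w -> LT u w -> False.
Proof.
  intros H L. destruct (rt_cases _ _ H) as [E|L2]. subst; eapply LT_irrefl; eauto.
  eapply LT_irrefl. eapply LT_trans; eauto.
Qed.


Definition sub {T : Type} (u : W) (G1 G2 : list (T * W)) : Prop :=
  (forall X x, clos_refl_trans W prec u x -> In (X, x) G1 -> In (X, x) G2) /\
  (forall X x, LT x u -> In (X, x) G2 -> In (X, x) G1).

Lemma sub_later {T} u w (G1 G2 : list (T*W)) : sub u G1 G2 -> LT w u -> sub w G1 G2 /\ sub w G2 G1.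
Proof.
  intros [S1 S2] L. split; split; intros X x H I.
  - apply S1; auto. apply rt_of. right. eapply LT_rt_trans; eauto.
  - apply S2; auto. eapply LT_trans; eauto.
  - apply S2; auto. eapply LT_rt_trans; eauto.
  - apply S1; auto. apply rt_of. right. eapply LT_trans; eauto.
Qed.

Lemma sub_cons {T} u (G1 G2 : list (T*W)) a : sub u G1 G2 -> sub u (a :: G1) (a :: G2).
Proof.
  intros [S1 S2]; split; intros X x H [E|I]; [left; auto | right; auto | left; auto | right; auto].
Qed.

Lemma sub_eqv {T} u (G1 G2 : list (T*W)) : (forall h, In h G1 <-> In h G2) -> sub u G1 G2.
Proof. intro E; split; intros; apply E; auto. Qed.

Lemma sub_refl {T} u (G : list (T*W)) : sub u G G.
Proof. apply sub_eqv; tauto. Qed.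

Definition jctx (j : fjudg W) : pctx W :=
  match j with JRF _ G _ => G | JInv _ G _ _ => G | JLF _ G _ _ _ => G end.
Definition jset (j : fjudg W) (G : pctx W) : fjudg W :=
  match j with JRF _ _ A => JRF W G A | JInv _ _ Om C => JInv W G Om C
  | JLF _ _ A w C => JLF W G A w C end.

Lemma Foc_mono : forall u j, Foc W prec wf u j -> forall G2, sub u (jctx j) G2 -> Foc W prec wf u (jset j G2).
Proof.
  intro u. induction u as [v IHv] using (well_founded_induction LT_wf).
  intros j H. rewrite Foc_eq in H.
  induction H; intros G2 S; rewrite Foc_eq; simpl in *.
  - apply f_QR. apply (proj1 S); auto. apply rt_refl.
  - apply f_DownR. rewrite <- Foc_eq. apply (IHFoc_at G2 S).
  - eapply f_DiaR; eauto. apply OF_iff in H0. destruct H0 as [L F].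
    apply OF_iff; split; auto. apply (IHv w' L _ F G2). simpl. apply (proj1 (sub_later _ _ _ _ S L)).
  - apply f_BoxR. intros w' p. specialize (H w' p). apply OF_iff in H. destruct H as [L F].
    apply OF_iff; split; auto. apply (IHv w' L _ F G2). simpl. apply (proj1 (sub_later _ _ _ _ S L)).
  - apply f_ImpR. rewrite <- Foc_eq. apply (IHFoc_at G2 S).
  - apply f_L; auto. rewrite <- Foc_eq. apply (IHFoc_at ((A, w') :: G2)). apply sub_cons; auto.
  - apply (f_DownL W prec (OF v) v G2 A w' C); auto. apply (proj1 S); auto. rewrite <- Foc_eq. apply (IHFoc_at G2 S).
  - apply f_BotL.
  - apply f_DiaL; auto. intros w p O2. apply OF_iff in O2. destruct O2 as [L F].
    assert (O1 : OF v w (JInv W G None (Up A))).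
    { apply OF_iff; split; auto. apply (IHv w L _ F G). simpl. apply (proj2 (sub_later _ _ _ _ S L)). }
    rewrite <- Foc_eq. apply (H1 w p O1 G2 S).
  - apply f_BoxL; auto. intros Hall. rewrite <- Foc_eq. refine (H1 _ G2 S).
    intros w p. specialize (Hall w p). apply OF_iff in Hall. destruct Hall as [L F].
    apply OF_iff; split; auto. apply (IHv w L _ F G). simpl. apply (proj2 (sub_later _ _ _ _ S L)).
  - apply f_UpR. rewrite <- Foc_eq. apply (IHFoc_at G2 S).
  - apply f_QL.
  - apply f_UpL. rewrite <- Foc_eq. apply (IHFoc_at G2 S).
  - apply f_ImpL_same; rewrite <- Foc_eq; [apply (IHFoc_at1 G2 S) | apply (IHFoc_at2 G2 S)].
  - eapply f_ImpL_later; eauto.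
    + apply OF_iff in H0. destruct H0 as [L F].
      apply OF_iff; split; auto. apply (IHv w' L _ F G2). simpl. apply (proj1 (sub_later _ _ _ _ S L)).
    + rewrite <- Foc_eq. apply (IHFoc_at G2 S).
Qed.

Lemma ND_mono : forall u G A, ND W prec wf u G A -> forall G2, sub u G G2 -> ND W prec wf u G2 A.
Proof.
  intro u. induction u as [v IHv] using (well_founded_induction LT_wf).
  intros G A H. rewrite ND_eq in H.
  assert (OT : forall w G1 G2 B, sub v G1 G2 -> ON v w G1 B -> ON v w G2 B).
  { intros w G1 G2 B S O1. apply ON_iff in O1. destruct O1 as [L F]. apply ON_iff; split; auto.
    apply (IHv w L _ _ F). apply (proj1 (sub_later _ _ _ _ S L)). }
  assert (OB : forall w G1 G2 B, sub v G1 G2 -> ON v w G2 B -> ON v w G1 B).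
  { intros w G1 G2 B S O1. apply ON_iff in O1. destruct O1 as [L F]. apply ON_iff; split; auto.
    apply (IHv w L _ _ F). apply (proj2 (sub_later _ _ _ _ S L)). }
  induction H; intros G2 S; rewrite ND_eq.
  - apply nd_hyp. apply (proj1 S); auto. apply rt_refl.
  - apply nd_botE_same. rewrite <- ND_eq; auto.
  - eapply nd_botE_later; eauto.
  - apply nd_impI. rewrite <- ND_eq. apply IHND_at. apply sub_cons; auto.
  - eapply nd_impE; rewrite <- ND_eq; eauto.
  - eapply nd_diaI; eauto.
  - apply nd_boxI. intros; eauto.
  - eapply nd_diaE_same. rewrite <- ND_eq; eauto.
    intros w' p O2. rewrite <- ND_eq. eapply H1; eauto.
  - eapply nd_diaE_later; eauto.
    intros w' p O2. rewrite <- ND_eq. eapply H2; eauto.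
  - eapply nd_boxE_same. rewrite <- ND_eq; eauto.
    intros Hall. rewrite <- ND_eq. eapply H1; eauto.
  - eapply nd_boxE_later; eauto.
    intros Hall. rewrite <- ND_eq. eapply H2; eauto.
Qed.


Definition seqv {T : Type} (G1 G2 : list (T * W)) := forall h, In h G1 <-> In h G2.

Lemma ND_subst : forall u Ga B0 w' B, ND W prec wf w' Ga B0 ->
  (ND W prec wf u ((B0, w') :: Ga) B <-> ND W prec wf u Ga B).
Proof.
  intro u. induction u as [v IHv] using (well_founded_induction LT_wf).
  intros Ga B0 w' B D0.
  destruct (classic (clos_refl_trans W prec v w')) as [R|NR].
  2:{ split; intro H; eapply ND_mono; eauto; split; intros X x Hx I.
      - destruct I as [E|I]; auto. inversion E; subst. contradiction.
      - right; auto.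
      - right; auto.
      - destruct I as [E|I]; auto. inversion E; subst. exfalso; apply NR. apply rt_of; auto. }
  assert (ONf : forall x G Gb A, seqv G ((B0, w') :: Gb) -> ND W prec wf w' Gb B0 ->
     ON v x G A -> ON v x Gb A).
  { intros x G Gb A S D O1. apply ON_iff in O1; destruct O1 as [L F]; apply ON_iff; split; auto.
    apply (IHv x L Gb B0 w' A D). eapply ND_mono; eauto. apply sub_eqv; auto. }
  assert (ONb : forall x G Gb A, seqv G ((B0, w') :: Gb) -> ND W prec wf w' Gb B0 ->
     ON v x Gb A -> ON v x G A).
  { intros x G Gb A S D O1. apply ON_iff in O1; destruct O1 as [L F]; apply ON_iff; split; auto.
    apply (IHv x L Gb B0 w' A D) in F. eapply ND_mono; eauto. apply sub_eqv; intro h; symmetry; auto. }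
  assert (Dext : forall Gb A, ND W prec wf w' Gb B0 -> ND W prec wf w' ((A, v) :: Gb) B0).
  { intros Gb A D. eapply ND_mono; eauto. split; intros X x Hx I; [right; auto|].
    destruct I as [E|I]; auto. inversion E; subst. exfalso; eapply rt_LT_contra; eauto. }
  split; intro H.
  - rewrite ND_eq in H. remember ((B0, w') :: Ga) as G0 eqn:EG.
    assert (S0 : seqv G0 ((B0, w') :: Ga)) by (subst; intro; tauto).
    clear EG. revert Ga S0 D0.
    induction H; intros Gb S D; rewrite ND_eq.
    + apply S in H. simpl in H. destruct H as [E|I].
      * inversion E; subst. rewrite <- ND_eq; auto.
      * apply nd_hyp; auto.
    + apply nd_botE_same. rewrite <- ND_eq; eauto.
    + eapply nd_botE_later; eauto.
    + apply nd_impI. rewrite <- ND_eq. apply IHND_at; auto.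
      intro h; simpl; rewrite (S h); simpl; tauto.
    + eapply nd_impE; rewrite <- ND_eq; eauto.
    + eapply nd_diaI; eauto.
    + apply nd_boxI; intros; eauto.
    + eapply nd_diaE_same. rewrite <- ND_eq; eauto.
      intros w'' p O2. rewrite <- ND_eq. eapply H1; eauto.
    + eapply nd_diaE_later; eauto.
      intros w'' p O2. rewrite <- ND_eq. eapply H2; eauto.
    + eapply nd_boxE_same. rewrite <- ND_eq; eauto.
      intros Hall. rewrite <- ND_eq. eapply H1; eauto.
    + eapply nd_boxE_later; eauto.
      intros Hall. rewrite <- ND_eq. eapply H2; eauto.
  - rewrite ND_eq in H.
    cut (forall G0, seqv G0 ((B0, w') :: Ga) -> ND W prec wf w' Ga B0 -> ND W prec wf v G0 B).
    { intro K. apply K; [intro; tauto | auto]. }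
    clear D0. induction H; intros Gx S D; rewrite ND_eq.
    + apply nd_hyp. apply S. right; auto.
    + apply nd_botE_same. rewrite <- ND_eq; eauto.
    + eapply nd_botE_later; eauto.
    + apply nd_impI. rewrite <- ND_eq. apply IHND_at; auto.
      intro h; simpl; rewrite (S h); simpl; tauto.
    + eapply nd_impE; rewrite <- ND_eq; eauto.
    + eapply nd_diaI; eauto.
    + apply nd_boxI; intros; eauto.
    + eapply nd_diaE_same. rewrite <- ND_eq; eauto.
      intros w'' p O2. rewrite <- ND_eq. eapply H1; eauto.
    + eapply nd_diaE_later; eauto.
      intros w'' p O2. rewrite <- ND_eq. eapply H2; eauto.
    + eapply nd_boxE_same. rewrite <- ND_eq; eauto.
      intros Hall. rewrite <- ND_eq. eapply H1; eauto.
    + eapply nd_boxE_later; eauto.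
      intros Hall. rewrite <- ND_eq. eapply H2; eauto.
Qed.


Definition bc_goal (v : W) (C : neg) (j : fjudg W) : Prop :=
  match j with
  | JInv _ G Om C0 => C0 = Up PBot -> Foc W prec wf v (JInv W G Om C)
  | JLF _ G N w' C0 => C0 = Up PBot -> Foc W prec wf v (JLF W G N w' C)
  | JRF _ _ _ => True
  end.

Lemma OF_weaken v w x j : clos_refl_trans W prec v w -> OF w x j -> OF v x j.
Proof. intros R O1; apply OF_iff in O1; destruct O1 as [L F]; apply OF_iff; split; auto.
  eapply rt_LT_trans; eauto. Qed.

Lemma bot_comm_gen w v C : clos_refl_trans W prec v w -> stable_neg C ->
  forall j, Foc_at W prec (OF w) w j -> bc_goal v C j.
Proof.
  intros R SC j H. induction H; simpl; try exact I; intros E; try discriminate; rewrite Foc_eq.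
  - apply f_L; auto. rewrite <- Foc_eq; auto.
  - apply (f_DownL W prec (OF v) v G A w' C); auto. eapply rt_trans'; eauto. rewrite <- Foc_eq; auto.
  - apply f_BotL.
  - apply f_DiaL. eapply rt_trans'; eauto. intros x p O1. rewrite <- Foc_eq. apply H1 with x; auto.
    apply OF_iff in O1; destruct O1 as [L F]; apply OF_iff; split; auto.
    eapply rt_LT_trans; eauto. apply prec_LT; auto.
  - apply f_BoxL. eapply rt_trans'; eauto. intros Hall. rewrite <- Foc_eq. apply H1; auto.
    intros x p. specialize (Hall x p).
    apply OF_iff in Hall; destruct Hall as [L F]; apply OF_iff; split; auto.
    eapply rt_LT_trans; eauto. apply prec_LT; auto.
  - inversion E; subst. inversion H.
  - apply f_UpL. rewrite <- Foc_eq; auto.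
  - destruct (rt_cases _ _ R) as [Ev|L].
    + subst. apply f_ImpL_same; auto. rewrite <- Foc_eq; auto.
    + apply f_ImpL_later. apply LT_ct; auto. apply OF_iff; split; auto. apply Foc_eq; auto.
      rewrite <- Foc_eq; auto.
  - apply f_ImpL_later.
    + apply LT_ct. eapply rt_LT_trans; eauto. apply ct_LT; auto.
    + eapply OF_weaken; eauto.
    + rewrite <- Foc_eq; auto.
Qed.

Lemma bot_comm w G v C : Foc W prec wf w (JInv W G None (Up PBot)) ->
  clos_refl_trans W prec v w -> stable_neg C -> Foc W prec wf v (JInv W G None C).
Proof.
  intros H R SC. rewrite Foc_eq in H. exact (bot_comm_gen w v C R SC _ H eq_refl).
Qed.


Lemma ominus_Up B A : ominus B = Up A -> A = oplus B.
Proof. destruct B; simpl; intro E; inversion E; auto. Qed.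
Lemma ominus_Imp B A N : ominus B = Imp A N ->
  exists B1 B2, B = UImp B1 B2 /\ A = oplus B1 /\ N = ominus B2.
Proof. destruct B; simpl; intro E; inversion E; eauto. Qed.
Lemma ominus_NAtom B q : ominus B = NAtom q -> B = UNegAt q.
Proof. destruct B; simpl; intro E; inversion E; auto. Qed.
Lemma oplus_PAtom B q : oplus B = PAtom q -> B = UPosAt q.
Proof. destruct B; simpl; intro E; inversion E; auto. Qed.
Lemma oplus_Down B N : oplus B = Down N -> N = ominus B.
Proof. destruct B; simpl; intro E; inversion E; auto. Qed.
Lemma oplus_PBot B : oplus B = PBot -> B = UBot.
Proof. destruct B; simpl; intro E; inversion E; auto. Qed.
Lemma oplus_PDia B A : oplus B = PDia A -> exists B1, B = UDia B1 /\ A = oplus B1.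
Proof. destruct B; simpl; intro E; inversion E; eauto. Qed.
Lemma oplus_PBox B A : oplus B = PBox A -> exists B1, B = UBox B1 /\ A = oplus B1.
Proof. destruct B; simpl; intro E; inversion E; eauto. Qed.
Lemma ctx_hyp_Down B N : ctx_hyp B = Down N -> N = ominus B.
Proof. destruct B; simpl; intro E; inversion E; auto. Qed.
Lemma ctx_hyp_PAtom B q : ctx_hyp B = PAtom q -> B = UPosAt q.
Proof. destruct B; simpl; intro E; inversion E; auto. Qed.
Lemma stable_oplus B : stable_pos (oplus B) -> ctx_hyp B = oplus B.
Proof. destruct B; simpl; intro E; try contradiction; auto. Qed.

Lemma In_ctx_pol (Ga : uctx W) X x : In (X, x) (ctx_pol Ga) <-> exists B, ctx_hyp B = X /\ In (B, x) Ga.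
Proof.
  unfold ctx_pol. rewrite in_map_iff. split.
  - intros [[B y] [E I]]. simpl in E. inversion E; subst. eauto.
  - intros [B [E I]]. exists (B, x). simpl; subst; auto.
Qed.

Lemma sub_ctx_pol u (G1 G2 : uctx W) : sub u G1 G2 -> sub u (ctx_pol G1) (ctx_pol G2).
Proof.
  intros [S1 S2]; split; intros X x H I; apply In_ctx_pol in I; destruct I as [B [E I]];
  apply In_ctx_pol; exists B; split; auto.
Qed.

Definition ext (v : W) (G1 G2 : uctx W) : Prop :=
  (forall h, In h G1 -> In h G2) /\ (forall A x, In (A, x) G2 -> x <> v -> In (A, x) G1).

Lemma ext_refl v G : ext v G G.
Proof. split; auto. Qed.
Lemma ext_trans v G1 G2 G3 : ext v G1 G2 -> ext v G2 G3 -> ext v G1 G3.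
Proof. intros [A1 B1] [A2 B2]; split; auto. Qed.
Lemma ext_cons v G A : ext v G ((A, v) :: G).
Proof. split. intros; right; auto. intros B x [E|I] N; auto. inversion E; subst; contradiction. Qed.
Lemma ext_cons2 v G1 G2 a : ext v G1 G2 -> ext v (a :: G1) (a :: G2).
Proof. intros [A1 B1]; split. intros h [E|I]; [left|right]; auto.
  intros B x [E|I] N; [left; auto| right; auto]. Qed.
Lemma ext_sub_v v G1 G2 : ext v G1 G2 -> sub v G1 G2.
Proof. intros [A1 B1]; split; auto. intros X x L I. apply B1; auto. intro E; subst.
  eapply LT_irrefl; eauto. Qed.
Lemma ext_sub_later v w G1 G2 : ext v G1 G2 -> LT w v -> sub w G2 G1 /\ sub w G1 G2.
Proof.
  intros [A1 B1] L; split; split; intros X x H I; auto.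
  - apply B1; auto. intro E; subst. eapply rt_LT_contra; eauto.
  - apply B1; auto. intro E; subst. eapply LT_irrefl; eapply LT_trans; eauto.
Qed.

Lemma upconv u G B : Foc W prec wf u (JInv W G None (ominus B)) ->
  Foc W prec wf u (JInv W G None (Up (oplus B))).
Proof.
  destruct B; simpl; auto; intro H; rewrite Foc_eq; apply f_UpR; apply f_DownR; rewrite <- Foc_eq; auto.
Qed.

Definition Cmp u := forall Ga B, ND W prec wf u Ga B -> Foc W prec wf u (JInv W (ctx_pol Ga) None (ominus B)).
Definition Snd u := forall Ga B,
  (Foc W prec wf u (JInv W (ctx_pol Ga) None (ominus B)) -> ND W prec wf u Ga B) /\
  (Foc W prec wf u (JInv W (ctx_pol Ga) None (Up (oplus B))) -> ND W prec wf u Ga B) /\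
  (Foc W prec wf u (JRF W (ctx_pol Ga) (oplus B)) -> ND W prec wf u Ga B).


Definition shape (C : neg) (B : uprop) := C = ominus B \/ C = Up (oplus B).

Definition Sgoal (v : W) (j : fjudg W) : Prop :=
  match j with
  | JRF _ G A => forall Ga Gb B, G = ctx_pol Ga -> ext v Ga Gb -> A = oplus B ->
      ND W prec wf v Gb B
  | JInv _ G None C => forall Ga Gb B, G = ctx_pol Ga -> ext v Ga Gb -> shape C B ->
      ND W prec wf v Gb B
  | JInv _ G (Some (X, w')) C => forall Ga Gb B0 B, G = ctx_pol Ga -> ext v Ga Gb ->
      X = oplus B0 -> shape C B -> clos_refl_trans W prec v w' ->
      ND W prec wf w' Gb B0 -> ND W prec wf v Gb B
  | JLF _ G N w' C => forall Ga Gb B0 B, G = ctx_pol Ga -> ext v Ga Gb ->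
      N = ominus B0 -> shape C B -> clos_refl_trans W prec v w' ->
      ND W prec wf w' Gb B0 -> ND W prec wf v Gb B
  end.

Lemma snd_level v : (forall u, LT u v -> Cmp u /\ Snd u) ->
  forall j, Foc_at W prec (OF v) v j -> Sgoal v j.
Proof.
  intros Lv j H. induction H; simpl.
  - intros Ga Gb B EG Ex EA. subst. apply eq_sym, oplus_PAtom in EA; subst.
    apply In_ctx_pol in H. destruct H as [B1 [E I]]. apply ctx_hyp_PAtom in E; subst.
    rewrite ND_eq. apply nd_hyp. apply Ex; auto.
  - intros Ga Gb B EG Ex EA. apply eq_sym, oplus_Down in EA; subst. eapply IHFoc_at; eauto. left; auto.
  - intros Ga Gb B EG Ex EA. apply eq_sym, oplus_PDia in EA. destruct EA as [B1 [E1 E2]]; subst.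
    apply OF_iff in H0. destruct H0 as [L F]. apply (proj1 (proj2 (proj2 (Lv _ L) Ga B1))) in F.
    rewrite ND_eq. eapply nd_diaI; eauto. apply ON_iff; split; auto.
    eapply ND_mono; eauto. apply (proj2 (ext_sub_later _ _ _ _ Ex L)).
  - intros Ga Gb B EG Ex EA. apply eq_sym, oplus_PBox in EA. destruct EA as [B1 [E1 E2]]; subst.
    rewrite ND_eq. apply nd_boxI. intros w' p. specialize (H w' p).
    apply OF_iff in H. destruct H as [L F]. apply (proj1 (proj2 (proj2 (Lv _ L) Ga B1))) in F.
    apply ON_iff; split; auto.
    eapply ND_mono; eauto. apply (proj2 (ext_sub_later _ _ _ _ Ex L)).
  - intros Ga Gb Bg EG Ex [EC|EC]; [|discriminate].
    apply eq_sym, ominus_Imp in EC. destruct EC as [B1 [B2 [E1 [E2 E3]]]]; subst.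
    rewrite ND_eq. apply nd_impI. rewrite <- ND_eq.
    eapply (IHFoc_at Ga ((B1, v) :: Gb) B1 B2); eauto.
    + eapply ext_trans; eauto. apply ext_cons.
    + left; auto.
    + apply rt_refl.
    + rewrite ND_eq; apply nd_hyp; left; auto.
  - intros Ga Gb B0 B EG Ex EA Sh R D. subst.
    assert (E := stable_oplus _ H).
    apply (proj1 (ND_subst v Gb B0 w' B D)).
    eapply (IHFoc_at ((B0, w') :: Ga)); eauto.
    + simpl. rewrite E. auto.
    + apply ext_cons2; auto.
  - intros Ga Gb B EG Ex Sh. subst.
    apply In_ctx_pol in H. destruct H as [B1 [E I]]. apply ctx_hyp_Down in E; subst.
    eapply IHFoc_at; eauto.
    rewrite ND_eq; apply nd_hyp. apply Ex; auto.
  - intros Ga Gb B0 B EG Ex EA Sh R D. apply eq_sym, oplus_PBot in EA; subst.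
    rewrite ND_eq. destruct (rt_cases _ _ R) as [E|L].
    + subst. apply nd_botE_same. rewrite <- ND_eq; auto.
    + eapply nd_botE_later. apply LT_ct; eauto. apply ON_iff; split; eauto.
  - intros Ga Gb B0 B EG Ex EA Sh R D. apply eq_sym, oplus_PDia in EA.
    destruct EA as [B1 [E1 E2]]; subst.
    assert (K : forall x, prec w' x -> LT x v -> ND W prec wf x Gb B1 -> ND_at W prec (ON v) v Gb B).
    { intros x p L Dx. rewrite <- ND_eq. refine (H1 x p _ Ga Gb B eq_refl Ex Sh).
      apply OF_iff; split; auto. apply upconv. apply (proj1 (Lv x L)).
      eapply ND_mono; eauto. apply (proj1 (ext_sub_later _ _ _ _ Ex L)). }
    rewrite ND_eq. destruct (rt_cases _ _ R) as [E|L].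
    + subst. eapply nd_diaE_same. rewrite <- ND_eq; eauto.
      intros x p O1. apply ON_iff in O1; destruct O1 as [L F]. eapply K; eauto.
    + eapply nd_diaE_later. apply LT_ct; eauto. apply ON_iff; split; eauto.
      intros x p O1. apply ON_iff in O1; destruct O1 as [L2 F]. eapply K; eauto.
  - intros Ga Gb B0 B EG Ex EA Sh R D. apply eq_sym, oplus_PBox in EA.
    destruct EA as [B1 [E1 E2]]; subst.
    assert (K : (forall x, prec w' x -> LT x v -> ND W prec wf x Gb B1) -> ND_at W prec (ON v) v Gb B).
    { intros Hall. rewrite <- ND_eq. eapply H1; eauto.
      intros x p. assert (L : LT x v) by (eapply rt_LT_trans; eauto; apply prec_LT; auto).
      apply OF_iff; split; auto. apply upconv. apply (proj1 (Lv x L)).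
      eapply ND_mono; eauto. apply (proj1 (ext_sub_later _ _ _ _ Ex L)). }
    rewrite ND_eq. destruct (rt_cases _ _ R) as [E|L].
    + subst. eapply nd_boxE_same. rewrite <- ND_eq; eauto.
      intros Hall. apply K. intros x p L. specialize (Hall x p). apply ON_iff in Hall; apply Hall.
    + eapply nd_boxE_later. apply LT_ct; eauto. apply ON_iff; split; eauto.
      intros Hall. apply K. intros x p L2. specialize (Hall x p). apply ON_iff in Hall; apply Hall.
  - intros Ga Gb B EG Ex [EC|EC].
    + apply eq_sym, ominus_Up in EC. eapply IHFoc_at; eauto.
    + inversion EC; subst. eapply IHFoc_at; eauto.
  - intros Ga Gb B0 B EG Ex EN [EC|EC] R D; [|discriminate].
    apply eq_sym, ominus_NAtom in EN. apply eq_sym, ominus_NAtom in EC. subst. auto.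
  - intros Ga Gb B0 B EG Ex EN Sh R D. apply eq_sym, ominus_Up in EN. eapply IHFoc_at; eauto.
  - intros Ga Gb B0 Bg EG Ex EN Sh R D. apply eq_sym, ominus_Imp in EN.
    destruct EN as [B1 [B2 [E1 [E2 E3]]]]; subst.
    assert (D1 : ND W prec wf v Gb B1) by (eapply IHFoc_at1; eauto).
    eapply IHFoc_at2; eauto.
    rewrite ND_eq. eapply nd_impE; rewrite <- ND_eq; eauto.
  - intros Ga Gb B0 Bg EG Ex EN Sh R D. apply eq_sym, ominus_Imp in EN.
    destruct EN as [B1 [B2 [E1 [E2 E3]]]]; subst.
    apply OF_iff in H0. destruct H0 as [L F]. apply (proj2 (proj2 (proj2 (Lv _ L) Ga B1))) in F.
    eapply IHFoc_at; eauto.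
    rewrite ND_eq. eapply nd_impE; rewrite <- ND_eq; eauto.
    eapply ND_mono; eauto. apply (proj2 (ext_sub_later _ _ _ _ Ex L)).
Qed.


Section Level.
Variable v : W.
Hypothesis Lv : forall u, LT u v -> Cmp u /\ Snd u.

Definition FF (Ga : uctx W) (C : neg) := Foc W prec wf v (JInv W (ctx_pol Ga) None C).

Definition Cov (Ga : uctx W) (P : uctx W -> Prop) : Prop :=
  forall G1, ext v Ga G1 -> forall C, stable_neg C ->
    (forall G2, ext v G1 G2 -> P G2 -> FF G2 C) -> FF G1 C.

Definition val (Ga : uctx W) (B : uprop) : Prop :=
  match B with
  | UPosAt q => In (UPosAt q, v) Ga
  | UDia A => exists w, prec v w /\ ND W prec wf w Ga A
  | UBox A => forall w, prec v w -> ND W prec wf w Ga A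
  | _ => False
  end.

Fixpoint sem (Ga : uctx W) (B : uprop) : Prop :=
  match B with
  | UNegAt q => FF Ga (NAtom q)
  | UImp A B' => forall G', ext v Ga G' -> sem G' A -> sem G' B'
  | _ => Cov Ga (fun G => val G B)
  end.

Lemma val_mono Ga Gb B : ext v Ga Gb -> val Ga B -> val Gb B.
Proof.
  intros E; destruct B; simpl; auto.
  - apply E.
  - intros [w [p D]]. exists w; split; auto. eapply ND_mono; eauto.
    apply (proj2 (ext_sub_later _ _ _ _ E (prec_LT _ _ p))).
  - intros H w p. eapply ND_mono; eauto.
    apply (proj2 (ext_sub_later _ _ _ _ E (prec_LT _ _ p))).
Qed.

Lemma FF_mono Ga Gb C : ext v Ga Gb -> FF Ga C -> FF Gb C.
Proof.
  intros E H. apply (Foc_mono _ _ H (ctx_pol Gb)). simpl. apply sub_ctx_pol, ext_sub_v; auto.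
Qed.

Lemma Cov_mono Ga Gb P : ext v Ga Gb -> Cov Ga P -> Cov Gb P.
Proof. intros E H G1 E1. apply H. eapply ext_trans; eauto. Qed.

Lemma Cov_unit Ga B : val Ga B -> Cov Ga (fun G => val G B).
Proof. intros V G1 E1 C sc k. apply k. apply ext_refl. eapply val_mono; eauto. Qed.

Lemma sem_mono B : forall Ga Gb, ext v Ga Gb -> sem Ga B -> sem Gb B.
Proof.
  induction B; intros Ga Gb E H; simpl in *; try (eapply Cov_mono; eauto; fail).
  - eapply FF_mono; eauto.
  - intros G' E'. apply H. eapply ext_trans; eauto.
Qed.

Lemma sem_monad B : forall Ga, Cov Ga (fun G => sem G B) -> sem Ga B.
Proof.
  induction B; intros Ga H; simpl in *.
  - intros G1 E1 C sc k. apply (H G1 E1 C sc). intros G2 E2 S2.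
    apply (S2 G2 (ext_refl _ _) C sc). intros G3 E3 V. apply k; auto. eapply ext_trans; eauto.
  - apply (H Ga (ext_refl _ _) (NAtom n) I). intros G2 E2 S2; auto.
  - intros G1 E1 C sc k. apply (H G1 E1 C sc). intros G2 E2 S2.
    apply (S2 G2 (ext_refl _ _) C sc). intros G3 E3 V. apply k; auto. eapply ext_trans; eauto.
  - intros G' E' SA. apply IHB2. intros G1 E1 C sc k. apply (H G1 (ext_trans _ _ _ _ E' E1) C sc).
    intros G2 E2 SI. apply k; auto. apply SI. apply ext_refl.
    eapply sem_mono; [|exact SA]. eapply ext_trans; eauto.
  - intros G1 E1 C sc k. apply (H G1 E1 C sc). intros G2 E2 S2.
    apply (S2 G2 (ext_refl _ _) C sc). intros G3 E3 V. apply k; auto. eapply ext_trans; eauto.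
  - intros G1 E1 C sc k. apply (H G1 E1 C sc). intros G2 E2 S2.
    apply (S2 G2 (ext_refl _ _) C sc). intros G3 E3 V. apply k; auto. eapply ext_trans; eauto.
Qed.


Definition Ne (Ga : uctx W) (B : uprop) : Prop :=
  forall G1, ext v Ga G1 -> forall C, stable_neg C ->
    Foc W prec wf v (JLF W (ctx_pol G1) (ominus B) v C) -> FF G1 C.

Lemma Ne_hyp Ga B : In (B, v) Ga -> Ne Ga B.
Proof.
  intros I G1 E1 C sc D. assert (I1 : In (B, v) G1) by (apply E1; auto).
  destruct B.
  - rewrite Foc_eq in D. inversion D; subst.
    match goal with Hx : Foc_at _ _ _ _ (JInv _ _ (Some _) _) |- _ => inversion Hx; subst end.
    unfold FF. apply Foc_mono with (j := JInv W ((PAtom n, v) :: ctx_pol G1) None C).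
    rewrite Foc_eq; auto. simpl. apply sub_eqv. intros h; split; intro Ih; [destruct Ih as [E|Ih]; auto|right; auto].
    subst. apply In_ctx_pol. exists (UPosAt n); auto.
  - unfold FF; rewrite Foc_eq. apply (f_DownL W prec (OF v) v _ (ominus (UNegAt n)) v C); auto.
    apply In_ctx_pol; eexists; split; [|exact I1]; reflexivity. apply rt_refl. rewrite <- Foc_eq; auto.
  - unfold FF; rewrite Foc_eq. apply (f_DownL W prec (OF v) v _ (ominus UBot) v C); auto.
    apply In_ctx_pol; eexists; split; [|exact I1]; reflexivity. apply rt_refl. rewrite <- Foc_eq; auto.
  - unfold FF; rewrite Foc_eq. apply (f_DownL W prec (OF v) v _ (ominus (UImp B1 B2)) v C); auto.
    apply In_ctx_pol; eexists; split; [|exact I1]; reflexivity. apply rt_refl. rewrite <- Foc_eq; auto.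
  - unfold FF; rewrite Foc_eq. apply (f_DownL W prec (OF v) v _ (ominus (UDia B)) v C); auto.
    apply In_ctx_pol; eexists; split; [|exact I1]; reflexivity. apply rt_refl. rewrite <- Foc_eq; auto.
  - unfold FF; rewrite Foc_eq. apply (f_DownL W prec (OF v) v _ (ominus (UBox B)) v C); auto.
    apply In_ctx_pol; eexists; split; [|exact I1]; reflexivity. apply rt_refl. rewrite <- Foc_eq; auto.
Qed.

Lemma later_up u Ga A : LT u v -> ND W prec wf u Ga A ->
  Foc W prec wf u (JInv W (ctx_pol Ga) None (Up (oplus A))).
Proof. intros L D. apply upconv. apply (proj1 (Lv u L)); auto. Qed.

Lemma later_snd u Ga A : LT u v -> Foc W prec wf u (JInv W (ctx_pol Ga) None (Up (oplus A))) ->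
  ND W prec wf u Ga A.
Proof. intros L F. apply (proj1 (proj2 (proj2 (Lv u L) Ga A))); auto. Qed.

Lemma val_RF Ga B : val Ga B -> Foc W prec wf v (JRF W (ctx_pol Ga) (oplus B)).
Proof.
  destruct B; simpl; intro V; try contradiction; rewrite Foc_eq.
  - apply f_QR. apply In_ctx_pol. exists (UPosAt n); auto.
  - destruct V as [w [p D]]. eapply f_DiaR; eauto. apply OF_iff; split. apply prec_LT; auto.
    apply later_up; auto. apply prec_LT; auto.
  - apply f_BoxR. intros w p. apply OF_iff; split. apply prec_LT; auto.
    apply later_up; auto. apply prec_LT; auto.
Qed.

Lemma RF A1 : (forall Ga, sem Ga A1 -> FF Ga (ominus A1)) ->
  forall Ga, sem Ga A1 -> forall C, stable_neg C ->
  (forall G2, ext v Ga G2 -> Foc W prec wf v (JRF W (ctx_pol G2) (oplus A1)) -> FF G2 C) -> FF Ga C.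
Proof.
  intros Rei Ga S C sc k.
  destruct A1; simpl in S;
    try (apply (S Ga (ext_refl _ _) C sc); intros G2 E2 V; apply k; auto; apply val_RF; auto; fail).
  - apply k. apply ext_refl. rewrite Foc_eq. apply f_DownR. rewrite <- Foc_eq. apply (Rei Ga). auto.
  - apply k. apply ext_refl. rewrite Foc_eq. apply f_DownR. rewrite <- Foc_eq. apply (Rei Ga). auto.
Qed.

Lemma rr B : (forall Ga, Ne Ga B -> sem Ga B) /\ (forall Ga, sem Ga B -> FF Ga (ominus B)).
Proof.
  induction B.
  - split.
    + intros Ga N G1 E1 C sc k. apply (N G1 E1 C sc). rewrite Foc_eq. apply f_UpL. apply f_L. exact I.
      rewrite <- Foc_eq. apply (k ((UPosAt n, v) :: G1)). apply ext_cons. left; auto.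
    + intros Ga S. apply (S Ga (ext_refl _ _) (ominus (UPosAt n)) I). intros G2 E2 V. unfold FF; rewrite Foc_eq.
      apply f_UpR. rewrite <- Foc_eq. apply (val_RF G2 (UPosAt n)); auto.
  - split.
    + intros Ga N. apply (N Ga (ext_refl _ _) (NAtom n) I). rewrite Foc_eq. apply f_QL.
    + intros Ga S; exact S.
  - split.
    + intros Ga N G1 E1 C sc k. apply (N G1 E1 C sc). rewrite Foc_eq. apply f_UpL. apply f_BotL.
    + intros Ga S. apply (S Ga (ext_refl _ _) (ominus UBot) I). intros G2 E2 V. contradiction.
  - destruct IHB1 as [Ref1 Rei1]. destruct IHB2 as [Ref2 Rei2]. split.
    + intros Ga N G' E' S1. apply Ref2. intros G1 E1 C sc D.
      apply (RF B1 Rei1 G1) with (C := C); auto.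
      * eapply sem_mono; eauto.
      * intros G2 E2 R. apply (N G2) with (C := C); auto.
        eapply ext_trans; eauto. eapply ext_trans; eauto.
        rewrite Foc_eq. apply f_ImpL_same; rewrite <- Foc_eq; auto.
        apply (Foc_mono _ _ D (ctx_pol G2)). simpl. apply sub_ctx_pol, ext_sub_v; auto.
    + intros Ga S. simpl. unfold FF; rewrite Foc_eq. apply f_ImpR.
      assert (Kst : stable_pos (oplus B1) -> FF ((B1, v) :: Ga) (ominus B2)).
      { intros st. apply Rei2. apply S. apply ext_cons. apply Ref1. apply Ne_hyp. left; auto. }
      destruct B1; simpl in Kst.
      * apply f_L. exact I. rewrite <- Foc_eq. apply Kst; exact I.
      * apply f_L. exact I. rewrite <- Foc_eq. apply Kst; exact I.
      * apply f_BotL.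
      * apply f_L. exact I. rewrite <- Foc_eq. apply Kst; exact I.
      * apply f_DiaL. apply rt_refl. intros x p O1. apply OF_iff in O1. destruct O1 as [L F].
        rewrite <- Foc_eq. apply Rei2. apply S. apply ext_refl. apply Cov_unit. simpl.
        exists x; split; auto. apply later_snd; auto.
      * apply f_BoxL. apply rt_refl. intros Hall.
        rewrite <- Foc_eq. apply Rei2. apply S. apply ext_refl. apply Cov_unit. simpl.
        intros x p. specialize (Hall x p). apply OF_iff in Hall. destruct Hall as [L F].
        apply later_snd; auto.
  - split.
    + intros Ga N G1 E1 C sc k. apply (N G1 E1 C sc). rewrite Foc_eq. apply f_UpL. apply f_DiaL.
      apply rt_refl. intros x p O1. apply OF_iff in O1. destruct O1 as [L F]. rewrite <- Foc_eq.
      apply k. apply ext_refl. simpl. exists x; split; auto. apply later_snd; auto.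
    + intros Ga S. apply (S Ga (ext_refl _ _) (ominus (UDia B)) I). intros G2 E2 V. unfold FF; rewrite Foc_eq.
      apply f_UpR. rewrite <- Foc_eq. apply (val_RF G2 (UDia B)); auto.
  - split.
    + intros Ga N G1 E1 C sc k. apply (N G1 E1 C sc). rewrite Foc_eq. apply f_UpL. apply f_BoxL.
      apply rt_refl. intros Hall. rewrite <- Foc_eq.
      apply k. apply ext_refl. simpl. intros x p. specialize (Hall x p).
      apply OF_iff in Hall. destruct Hall as [L F]. apply later_snd; auto.
    + intros Ga S. apply (S Ga (ext_refl _ _) (ominus (UBox B)) I). intros G2 E2 V. unfold FF; rewrite Foc_eq.
      apply f_UpR. rewrite <- Foc_eq. apply (val_RF G2 (UBox B)); auto.
Qed.


Definition rel (Ga Gd : uctx W) := forall A x, LT x v -> (In (A, x) Ga <-> In (A, x) Gd).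

Lemma rel_sub Ga Gd x : rel Ga Gd -> LT x v -> sub x Ga Gd /\ sub x Gd Ga.
Proof.
  intros R L; split; split; intros X y H I.
  - apply R; auto. eapply LT_rt_trans; eauto.
  - apply R; auto. eapply LT_trans; eauto.
  - apply R; auto. eapply LT_rt_trans; eauto.
  - apply R; auto. eapply LT_trans; eauto.
Qed.

Lemma rel_ext Ga Gd G1 : rel Ga Gd -> ext v Gd G1 -> rel Ga G1.
Proof.
  intros R [E1 E2] A x L. rewrite (R A x L). split; auto. intro I; apply E2; auto.
  intro E; subst; eapply LT_irrefl; eauto.
Qed.

Lemma ND_rel x Ga Gd A : rel Ga Gd -> LT x v -> ND W prec wf x Ga A -> ND W prec wf x Gd A.
Proof. intros R L D. eapply ND_mono; eauto. apply (proj1 (rel_sub _ _ _ R L)). Qed.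
Lemma ND_rel' x Ga Gd A : rel Ga Gd -> LT x v -> ND W prec wf x Gd A -> ND W prec wf x Ga A.
Proof. intros R L D. eapply ND_mono; eauto. apply (proj2 (rel_sub _ _ _ R L)). Qed.

Lemma BotLater Gd w C : LT w v -> ND W prec wf w Gd UBot -> sem Gd C.
Proof.
  intros L D. apply sem_monad. intros G1 E1 C' sc k.
  assert (D1 : ND W prec wf w G1 UBot).
  { eapply ND_mono; eauto. apply (proj2 (ext_sub_later _ _ _ _ E1 L)). }
  apply (proj1 (Lv w L)) in D1. simpl in D1. unfold FF. eapply bot_comm; eauto.
  apply rt_of; auto.
Qed.

Lemma eval Ga B : ND_at W prec (ON v) v Ga B ->
  forall Gd, rel Ga Gd -> (forall A, In (A, v) Ga -> sem Gd A) -> sem Gd B.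
Proof.
  induction 1; intros Gd R Env.
  - auto.
  - apply sem_monad. intros G1 E1 C' sc k. apply (IHND_at Gd R Env G1 E1 C' sc).
    intros G2 E2 V; contradiction.
  - apply ON_iff in H0. destruct H0 as [L D]. eapply BotLater; eauto. eapply ND_rel; eauto.
  - simpl. intros G' E' SA. apply IHND_at.
    + intros A' x L. simpl. rewrite (rel_ext _ _ _ R E' A' x L). split; auto.
      intros [E|I]; auto. inversion E; subst. exfalso; eapply LT_irrefl; eauto.
    + intros A' [E|I]. inversion E; subst; auto. eapply sem_mono; eauto.
  - apply (IHND_at1 Gd R Env Gd (ext_refl _ _)). apply IHND_at2; auto.
  - apply Cov_unit. simpl. apply ON_iff in H0. destruct H0 as [L D].
    exists w'; split; auto. eapply ND_rel; eauto.
  - apply Cov_unit. simpl. intros w p. specialize (H w p). apply ON_iff in H. destruct H as [L D].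
    eapply ND_rel; eauto.
  - apply sem_monad. intros G1 E1 C' sc k. apply (IHND_at Gd R Env G1 E1 C' sc).
    intros G2 E2 [w [p D]]. assert (L : LT w v) by (apply prec_LT; auto).
    assert (R2 : rel G G2) by (eapply rel_ext; [eapply rel_ext; eauto|]; eauto).
    apply k; auto. apply (H1 w p).
    + apply ON_iff; split; auto. eapply ND_rel'; eauto.
    + auto.
    + intros A' I. eapply sem_mono; [|apply Env; auto]. eapply ext_trans; eauto.
  - apply ON_iff in H0. destruct H0 as [L D].
    destruct (classic (exists w', prec w w' /\ ND W prec wf w' G A)) as [[w' [p D']]|NE].
    + apply (H2 w' p); auto. apply ON_iff; split; auto. eapply LT_trans; eauto. apply prec_LT; auto.
    + apply (BotLater Gd w); auto. eapply ND_rel; eauto.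
      rewrite ND_eq. eapply nd_diaE_same. rewrite <- ND_eq; eauto.
      intros w' p O1. apply ON_iff in O1. destruct O1 as [L2 D2]. exfalso; apply NE; eauto.
  - apply sem_monad. intros G1 E1 C' sc k. apply (IHND_at Gd R Env G1 E1 C' sc).
    intros G2 E2 V. simpl in V.
    assert (R2 : rel G G2) by (eapply rel_ext; [eapply rel_ext; eauto|]; eauto).
    apply k; auto. apply H1.
    + intros w p. assert (L : LT w v) by (apply prec_LT; auto).
      apply ON_iff; split; auto. eapply ND_rel'; eauto.
    + auto.
    + intros A' I. eapply sem_mono; [|apply Env; auto]. eapply ext_trans; eauto.
  - apply ON_iff in H0. destruct H0 as [L D].
    destruct (classic (forall w', prec w w' -> ND W prec wf w' G A)) as [AL|NA].
    + apply H2; auto. intros w' p. apply ON_iff; split; auto. eapply LT_trans; eauto. apply prec_LT; auto.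
    + apply (BotLater Gd w); auto. eapply ND_rel; eauto.
      rewrite ND_eq. eapply nd_boxE_same. rewrite <- ND_eq; eauto.
      intros Hall. exfalso; apply NA. intros w' p. specialize (Hall w' p).
      apply ON_iff in Hall. apply Hall.
Qed.

Lemma cmp_level : Cmp v.
Proof.
  intros Ga B D. rewrite ND_eq in D. apply (proj2 (rr B)).
  apply (eval Ga B D Ga). intros A x L; tauto.
  intros A I. apply (proj1 (rr A)). apply Ne_hyp; auto.
Qed.

End Level.

Lemma all_levels : forall u, Cmp u /\ Snd u.
Proof.
  intro u. induction u as [v IHv] using (well_founded_induction LT_wf).
  split. apply cmp_level; auto.
  intros Ga B. assert (K := snd_level v IHv).
  split; [|split]; intro H; rewrite Foc_eq in H; apply K in H; simpl in H.
  - eapply H; eauto. apply ext_refl. left; auto.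
  - eapply H; eauto. apply ext_refl. right; auto.
  - eapply H; eauto. apply ext_refl.
Qed.

End Main.

Theorem theorem5 (W : Type) (prec : W -> W -> Prop)
  (wf : well_founded (fun x y => prec y x))
  (G : list (uprop * W)) (A : uprop) (w : W) :
  nd_derivable W prec wf G A w <->
  inv_derivable W prec wf (ctx_pol G) None (ominus A) w.
Proof.
  unfold nd_derivable, inv_derivable. destruct (all_levels W prec wf w) as [C S]. split.
  - apply C.
  - apply (proj1 (S G A)).
Qed.
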